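(* Let $K\subset\mathbb R^{2d-2}$ be a compact set such that $\pi_0(K)$ has non-empty interior in $\mathbb R^{d-1}$, where $\pi_0:\mathbb R^{2d-2}\to\mathbb R^{d-1}$ is the projection onto the first $d-1$ coordinates. Writing points of $K$ as $(\mathbf v,\mathbf a)$ with $\mathbf v,\mathbf a\in\mathbb R^{d-1}$, let $$\mathbb K_0=\bigcup_{(\mathbf v,\mathbf a)\in K}\{(\mathbf a,0)+t(\mathbf v,1): t\in[0,1]\}\subset\mathbb R^d.$$ Then some finite union of rotated copies of $\mathbb K_0$ is a Kakeya set in $\mathbb R^d$.
   Context: A Kakeya set in $\mathbb R^d$ is a compact set containing a unit line segment in every direction. *)

(* Defs.v *)
From HB Require Import structures.
From mathcomp Require Import all_boot all_order all_algebra.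
From mathcomp Require Import all_classical all_reals all_analysis.
Set Implicit Arguments. Unset Strict Implicit. Unset Printing Implicit Defensive.
Import Order.TTheory GRing.Theory Num.Theory.
Import numFieldNormedType.Exports.
Local Open Scope classical_set_scope.
Local Open Scope ring_scope.

Definition sqnorm (R : realType) (m : nat) (e : 'rV[R]_m) : R :=
  \sum_(i < m) e ord0 i ^+ 2.

Definition kakeya (R : realType) (m : nat) (E : set 'rV[R]_m) : Prop :=
  compact E /\
  forall e : 'rV[R]_m, sqnorm e = 1 ->
    exists x : 'rV[R]_m,
      [set x + t *: e | t in `[0, 1]%classic] `<=` E.

Definition rotation (R : realType) (m : nat) (Q : 'M[R]_m) : Prop :=
  Q *m Q^T = 1%:M /\ \det Q = 1.

Definition rotate (R : realType) (m : nat) (Q : 'M[R]_m) (A : set 'rV[R]_m)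
  : set 'rV[R]_m := [set x *m Q | x in A].

Definition pi0 (R : realType) (n : nat) (p : 'rV[R]_(n + n)) : 'rV[R]_n :=
  lsubmx p.

Definition K0 (R : realType) (n : nat) (K : set 'rV[R]_(n + n))
  : set 'rV[R]_(n + 1) :=
  [set y | exists p, K p /\ exists t : R, 0 <= t <= 1 /\
     y = row_mx (rsubmx p) (0 : 'rV[R]_1) + t *: row_mx (lsubmx p) (1 : 'rV[R]_1)].

(* Main.v *)
Require Import Defs.
From HB Require Import structures.
From mathcomp Require Import all_boot all_order all_algebra.
From mathcomp Require Import all_classical all_reals all_analysis.
From mathcomp Require Import lra ring.
Import Order.TTheory GRing.Theory Num.Theory.
Import numFieldNormedType.Exports.
Local Open Scope classical_set_scope.
Local Open Scope ring_scope.

Lemma mx_cont (R : realType) (T : topologicalType) p q (f : T -> 'M[R]_(p,q)) :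
  (forall i j, continuous (fun x => f x i j)) -> continuous f.
Proof.
move=> fc x A /nbhs_ballP [e e0 eA].
apply: (filterS (P := fun y => forall i j, ball (f x i j) e (f y i j))).
  by move=> y H; apply: eA; split.
apply: filter_forall => i; apply: filter_forall => j.
by apply: (fc i j x); apply: nbhsx_ballx.
Qed.

Lemma mulmx_cont (R : realType) p q r (Q : 'M[R]_(q,r)) :
  continuous (fun x : 'M[R]_(p,q) => x *m Q).
Proof.
apply: mx_cont => i j.
have -> : (fun x : 'M[R]_(p,q) => (x *m Q) i j) =
   (fun x => \sum_(k < q) x i k * Q k j).
  by apply: funext => x; rewrite mxE.
set g := (fun x : 'M[R]_(p,q) => \sum_(k < q) x i k * Q k j).
apply: (@continuous_big _ _ +%R 0 xpredT).
  exact: add_continuous.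
move=> k _ x.
apply: (@continuousM R _ (fun x : 'M[R]_(p,q) => x i k) (fun=> Q k j)).
  exact: coord_continuous.
exact: cst_continuous.
Qed.


Lemma rotate_compact (R : realType) m (Q : 'M[R]_m) (A : set 'rV[R]_m) :
  compact A -> compact (rotate Q A).
Proof.
move=> cA; apply: continuous_compact => //.
by apply: continuous_subspaceT; apply: mulmx_cont.
Qed.

Lemma union_compact (R : realType) m (s : seq 'M[R]_m) (A : set 'rV[R]_m) :
  compact A -> compact [set y | exists2 Q, Q \in s & rotate Q A y].
Proof.
move=> cA; elim: s => [|Q s IH].
  have -> : [set y | exists2 Q : 'M[R]_m, Q \in [::] & rotate Q A y] = set0.
    by apply/seteqP; split => y // [].
  exact: compact0.
have -> : [set y | exists2 Q0, Q0 \in Q :: s & rotate Q0 A y] =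
   rotate Q A `|` [set y | exists2 Q, Q \in s & rotate Q A y].
  apply/seteqP; split => y.
    by move=> [Q0]; rewrite inE => /orP [/eqP -> |]; [left | right; exists Q0].
  by case=> [h|[Q0 h1 h2]]; [exists Q; rewrite ?inE ?eqxx | exists Q0; rewrite ?inE ?h1 ?orbT].
by apply: compactU => //; apply: rotate_compact.
Qed.

Lemma K0_eq (R : realType) n (K : set 'rV[R]_(n + n)) :
  let Am := col_mx (0 : 'M[R]_(n, n+1)) (row_mx (1%:M : 'M[R]_n) 0) in
  let Bm := col_mx (row_mx (1%:M : 'M[R]_n) 0) (0 : 'M[R]_(n, n+1)) in
  let c := row_mx (0 : 'rV[R]_n) (1 : 'rV[R]_1) in
  K0 K = (fun z : 'rV[R]_(n+n) * R => z.1 *m Am + z.2 *: (z.1 *m Bm + c)) @`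
           (K `*` `[0, 1]).
Proof.
move=> Am Bm c.
have E1 (p : 'rV[R]_(n+n)) : p *m Am = row_mx (rsubmx p) 0.
  by rewrite -{1}(hsubmxK p) mul_row_col mulmx0 add0r mul_mx_row mulmx1 mulmx0.
have E2 (p : 'rV[R]_(n+n)) : p *m Bm + c = row_mx (lsubmx p) 1.
  rewrite -{1}(hsubmxK p) mul_row_col mulmx0 addr0 mul_mx_row mulmx1 mulmx0.
  by rewrite /c add_row_mx addr0 add0r.
apply/seteqP; split => y.
  move=> [p [Kp [t [ht ->]]]]; exists (p, t); last by rewrite /= E1 E2.
  by split => //=; rewrite in_itv.
move=> [[p t] [/= Kp]]; rewrite in_itv /= => ht <-.
by exists p; split => //; exists t; split => //; rewrite E1 E2.
Qed.

Lemma fst_mul_cont (R : realType) p q r (Q : 'M[R]_(q,r)) (T : topologicalType) :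
  continuous (fun z : 'M[R]_(p,q) * T => z.1 *m Q).
Proof.
move=> z; apply: (@continuous_comp _ _ _ fst (fun x : 'M[R]_(p,q) => x *m Q)).
  exact: cvg_fst.
exact: mulmx_cont.
Qed.

Lemma K0_compact (R : realType) n (K : set 'rV[R]_(n + n)) :
  compact K -> compact (K0 K).
Proof.
move=> cK; rewrite K0_eq; apply: continuous_compact; last first.
  by apply: compact_setX => //; apply: segment_compact.
apply: continuous_subspaceT => z.
apply: (@continuousD R _ _ (fun z : 'rV[R]_(n+n) * R => z.1 *m _)
   (fun z : 'rV[R]_(n+n) * R => z.2 *: (z.1 *m _ + _))).
  exact: fst_mul_cont.
apply: (@continuousZ R _ _ (fun z : 'rV[R]_(n+n) * R => z.2)
   (fun z : 'rV[R]_(n+n) * R => (z.1 *m _ + _))); first exact: cvg_snd.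
apply: (@continuousD R _ _ (fun z : 'rV[R]_(n+n) * R => z.1 *m _)
   (fun z : 'rV[R]_(n+n) * R => _)); last exact: cst_continuous.
exact: fst_mul_cont.
Qed.


Lemma sqnormE (R : realType) m (x : 'rV[R]_m) : x *m x^T = (sqnorm x)%:M.
Proof.
rewrite [LHS]mx11_scalar mxE /sqnorm; congr (_%:M).
by apply: eq_bigr => k _; rewrite !mxE expr2.
Qed.

Lemma tr11 (R : realType) (M : 'M[R]_1) : M^T = M.
Proof. by rewrite [M]mx11_scalar tr_scalar_mx. Qed.

Lemma sqnorm_orth (R : realType) m (Q : 'M[R]_m) (x : 'rV[R]_m) :
  Q *m Q^T = 1%:M -> sqnorm (x *m Q) = sqnorm x.
Proof.
move=> hQ.
have : (sqnorm (x *m Q))%:M = (sqnorm x)%:M :> 'M[R]_1.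
  by rewrite -!sqnormE trmx_mul mulmxA -(mulmxA x) hQ mulmx1.
by move/(congr1 (fun M : 'M[R]_1 => M 0 0)); rewrite !mxE.
Qed.

Lemma sqnorm_ge (R : realType) m (x : 'rV[R]_m) i : x 0 i ^+ 2 <= sqnorm x.
Proof.
rewrite /sqnorm (bigD1 i) //= lerDl; apply: sumr_ge0 => k _; exact: sqr_ge0.
Qed.

Lemma sqnorm_eq0 (R : realType) m (x : 'rV[R]_m) : sqnorm x = 0 -> x = 0.
Proof.
move=> H; apply/rowP => i; rewrite mxE.
have := @psumr_eq0P R _ xpredT (fun k => x 0 k ^+ 2) (fun k _ => sqr_ge0 (x 0 k)) H i isT.
by move/eqP; rewrite sqrf_eq0 => /eqP.
Qed.

Lemma unit_skew (R : realType) m (A : 'M[R]_m) : A^T = - A -> (1%:M + A) \in unitmx.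
Proof.
move=> skew; rewrite -row_free_unit -kermx_eq0.
set Kk := kermx (1%:M + A).
have H : Kk *m (1%:M + A) = 0 by apply/eqP; rewrite -sub_kermx submx_refl.
apply/eqP/row_matrixP => i; rewrite row0.
set v := row i Kk.
have hv : v *m (1%:M + A) = 0 by rewrite -row_mul H row0.
have e1 : v *m v^T + v *m A *m v^T = 0.
  by rewrite -mulmxDl -{1}(mulmx1 v) -mulmxDr hv mul0mx.
set a := (v *m A *m v^T) 0 0.
have ha : a = - a.
  rewrite /a; transitivity ((v *m A *m v^T)^T 0 0); first by rewrite tr11.
  rewrite !trmx_mul trmxK skew mulNmx mulmxN mulmxA.
  by rewrite [LHS]mxE.
have a0 : a = 0 by lra.
have : sqnorm v = 0.
  have := congr1 (fun M : 'M[R]_1 => M 0 0) e1.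
  rewrite sqnormE /= [in X in X = _ -> _]mxE -/a a0 addr0 !mxE /=.
  by rewrite mulr1n.
exact: sqnorm_eq0.
Qed.

Lemma cayley (R : realType) m (e u : 'rV[R]_m) :
  sqnorm e = 1 -> sqnorm u = 1 -> 1 + (e *m u^T) 0 0 != 0 ->
  exists P : 'M[R]_m, P *m P^T = 1%:M /\ \det P = 1 /\ e *m P = u.
Proof.
move=> he hu.
set c := (e *m u^T) 0 0 => c1.
set k := (1 + c)^-1.
set A := k *: (u^T *m e - e^T *m u).
have skew : A^T = - A.
  by rewrite /A linearZ /= linearB /= !trmx_mul !trmxK -scalerN opprB.
set X := 1%:M + A; set Y := 1%:M - A.
have uX : X \in unitmx by exact: unit_skew.
have YT : X^T = Y by rewrite /X linearD /= trmx1 skew.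
have uY : Y \in unitmx by rewrite -YT unitmx_tr.
have XY : X *m Y = Y *m X.
  rewrite /X /Y !(mulmxDl, mulmxBr, mulmxBl, mulmxDr, mul1mx, mulmx1).
  by rewrite !addrA addrNK addrK ?mulNmx ?mulmxN.
have ee : e *m e^T = 1%:M by rewrite sqnormE he.
have uu : u *m u^T = 1%:M by rewrite sqnormE hu.
have eu : e *m u^T = c%:M by rewrite [LHS]mx11_scalar.
have ue : u *m e^T = c%:M by rewrite -[LHS]trmxK trmx_mul trmxK eu tr_scalar_mx.
have eA : e *m A = k *: (c *: e - u).
  rewrite /A -scalemxAr mulmxBr !mulmxA eu ee !mul_scalar_mx ?scale1r.
  by [].
have uA : u *m A = k *: (e - c *: u).
  rewrite /A -scalemxAr mulmxBr !mulmxA ue uu !mul_scalar_mx ?scale1r.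
  by [].
have key : e *m Y = u *m X.
  rewrite /X /Y mulmxBr mulmxDr !mulmx1 eA uA.
  apply/rowP => j; rewrite !mxE /k.
  by field.
exists (Y *m invmx X); split; last split.
- rewrite trmx_mul trmx_inv YT.
  have -> : Y^T = X by rewrite -YT trmxK.
  have h1 : Y *m invmx X = invmx X *m Y.
    by rewrite -[LHS](mulKmx uX) (mulmxA X Y) XY -(mulmxA Y X) mulmxV // mulmx1.
  by rewrite h1 mulmxA -(mulmxA (invmx X)) mulmxV // mulmx1 mulVmx.
- rewrite det_mulmx det_inv -YT det_tr mulfV //.
  by move: uX; rewrite unitmxE unitfE.
- by rewrite mulmxA key mulmxK.
Qed.


Lemma rot_exists (R : realType) m (e u : 'rV[R]_m) :
  sqnorm e = 1 -> sqnorm u = 1 ->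
  exists Q, rotation Q /\ exists lam : R, lam != 0 /\ e *m Q^T = lam *: u.
Proof.
move=> he hu.
set c := (e *m u^T) 0 0.
have ee : e *m e^T = 1%:M by rewrite sqnormE he.
have uu : u *m u^T = 1%:M by rewrite sqnormE hu.
have eu : e *m u^T = c%:M by rewrite [LHS]mx11_scalar.
have ue : u *m e^T = c%:M by rewrite -[LHS]trmxK trmx_mul trmxK eu tr_scalar_mx.
case: (eqVneq (1 + c) 0) => c1; last first.
  have [P [hP [dP eP]]] := cayley _ _ _ _ he hu c1.
  exists P^T; split; last by exists 1; split; [exact: oner_neq0 | rewrite trmxK eP scale1r].
  by split; [rewrite trmxK; exact: mulmx1C | rewrite det_tr].
exists 1%:M; split.
  by split; [rewrite trmx1 mulmx1 | rewrite det1].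
exists (-1); split; first by rewrite oppr_eq0 oner_neq0.
rewrite trmx1 mulmx1 scaleN1r.
have : (sqnorm (e + u))%:M = 0 :> 'M[R]_1.
  rewrite -sqnormE linearD /= !(mulmxDl, mulmxDr) ee eu ue uu.
  apply/rowP => j; rewrite !mxE /= (ord1 j) eqxx /= mulr1n; lra.
move/(congr1 (fun M : 'M[R]_1 => M 0 0)); rewrite !mxE /= mulr1n => /sqnorm_eq0.
by move/eqP; rewrite addr_eq0 => /eqP.
Qed.

Definition lst n : 'I_(n + 1) := rshift n ord0.

Definition phi {R : realType} {n} (w : 'rV[R]_(n + 1)) : 'rV[R]_n :=
  (w 0 (lst n))^-1 *: lsubmx w.

Lemma phi_cont {R : realType} {n} (w : 'rV[R]_(n + 1)) :
  w 0 (lst n) != 0 -> {for w, continuous (@phi R n)}.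
Proof.
move=> w0.
apply: (@continuousZ R _ _ (fun x : 'rV[R]_(n+1) => (x 0 (lst n))^-1) lsubmx).
  by apply: continuousV => //; exact: coord_continuous.
exact: continuous_lsubmx.
Qed.

Lemma open_O (R : realType) n (v0 : 'rV[R]_n) (eps : R) :
  open [set w : 'rV[R]_(n + 1) | w 0 (lst n) != 0 /\ ball v0 eps (phi w)].
Proof.
rewrite openE => w [w0 hb].
rewrite /interior.
near=> x; split.
  near: x.
  apply: (@coord_continuous R 1 (n+1) 0 (lst n) w [set y | y != 0]); apply: open_nbhs_nbhs; split => //.
near: x.
apply: (phi_cont w w0 (ball v0 eps)); apply: open_nbhs_nbhs; split => //.
exact: ball_open.
Unshelve. all: by end_near.
Qed.


Lemma sqnormZ (R : realType) m (a : R) (x : 'rV[R]_m) :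
  sqnorm (a *: x) = a ^+ 2 * sqnorm x.
Proof.
rewrite /sqnorm mulr_sumr; apply: eq_bigr => i _; by rewrite mxE exprMn.
Qed.

Lemma sqnorm_cont (R : realType) m : continuous (@sqnorm R m).
Proof.
have -> : @sqnorm R m = (fun x => \sum_(i < m) x 0 i * x 0 i).
  by apply: funext => x; apply: eq_bigr => i _; rewrite expr2.
apply: (@continuous_big _ _ +%R 0 xpredT).
  exact: add_continuous.
move=> k _ x.
apply: (@continuousM R _ (fun x : 'rV[R]_m => x 0 k) (fun x : 'rV[R]_m => x 0 k));
  exact: coord_continuous.
Qed.

Lemma sphere_compact (R : realType) m :
  compact [set x : 'rV[R]_m | sqnorm x = 1].
Proof.
apply: (@subclosed_compact _ _ [set v : 'rV[R]_m | forall i, `[-1, 1]%classic (v ord0 i)]).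
- apply: (@preimage_closed _ _ (@sqnorm R m) [set x | x = 1]).
    by move=> x _; exact: sqnorm_cont.
  exact: closed_eq.
- apply: (@rV_compact R m (fun=> `[-1, 1]%classic)) => i; exact: segment_compact.
- move=> x /= hx i; rewrite in_itv /=.
  have := sqnorm_ge _ _ x i; rewrite hx => h.
  apply/andP; split; nra.
Qed.

Theorem proposition2p1 (R : realType) (n : nat) (hn : (0 < n)%N)
  (K : set 'rV[R]_(n + n)) (hK : compact K)
  (hint : (interior (pi0 (R:=R) (n:=n) @` K)) !=set0) :
  exists s : seq 'M[R]_(n + 1),
    (forall Q, Q \in s -> rotation Q) /\
    kakeya [set y | exists2 Q, Q \in s & rotate Q (K0 K) y].
Proof.
case: hint => v0 /nbhs_ballP [eps eps0 hball].
set w0 := row_mx v0 (1 : 'rV[R]_1) : 'rV[R]_(n + 1).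
have w0l : w0 0 (lst n) = 1 by rewrite /w0 /lst row_mxEr mxE.
have hw0 : 0 < sqnorm w0.
  by apply: (lt_le_trans _ (sqnorm_ge _ _ w0 (lst n))); rewrite w0l expr1n.
set k := (Num.sqrt (sqnorm w0))^-1.
have k0 : 0 < k by rewrite invr_gt0 sqrtr_gt0.
set u := k *: w0.
have hu : sqnorm u = 1.
  by rewrite sqnormZ exprVn sqr_sqrtr ?(ltW hw0) // mulVf // gt_eqF.
have phiu : forall lam : R, lam != 0 ->
    (lam *: u) 0 (lst n) != 0 /\ phi (lam *: u) = v0.
  move=> lam l0; rewrite /u scalerA.
  have a0 : lam * k != 0 by rewrite mulf_neq0 // gt_eqF.
  have e1 : (lam * k *: w0) 0 (lst n) = lam * k by rewrite mxE w0l mulr1.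
  split; first by rewrite e1.
  by rewrite /phi e1 linearZ /= row_mxKl scalerA mulVf // scale1r.
pose O := [set w : 'rV[R]_(n + 1) | w 0 (lst n) != 0 /\ ball v0 eps (phi w)].
pose U := fun Q : 'M[R]_(n + 1) => (fun x : 'rV[R]_(n + 1) => x *m Q^T) @^-1` O.
have := sphere_compact R (n + 1); rewrite compact_cover.
move=> /(_ _ (@rotation R (n + 1)) U) [].
- move=> Q _; apply: open_comp; last exact: open_O.
  by move=> x _; apply: mulmx_cont.
- move=> x Sx.
  have [Q [rQ [lam [l0 eQ]]]] := rot_exists _ _ x u Sx hu.
  exists Q => //; rewrite /U /O /= eQ.
  have [h1 h2] := phiu lam l0.
  by split => //; rewrite h2; apply: ballxx.
move=> D' sD cov.
exists (finmap.enum_fset D'); split.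
  by move=> Q hQ; have := sD Q hQ; rewrite inE.
split; first by apply: union_compact; apply: K0_compact.
move=> e he.
have [Q hQ hUQ] := cov e he.
have rQ : rotation Q by have := sD Q hQ; rewrite inE.
have QQ : Q^T *m Q = 1%:M by apply: mulmx1C; case: rQ.
move: hUQ; rewrite /U /O /=.
set w := e *m Q^T => -[wl hb].
have [p Kp hp] := hball _ hb.
set lam := w 0 (lst n).
set d := row_mx (lsubmx p) (1 : 'rV[R]_1) : 'rV[R]_(n + 1).
have hw : w = lam *: d.
  rewrite -[w](hsubmxK w) /d scale_row_mx; congr row_mx.
    by rewrite (_ : lsubmx p = phi w) // /phi scalerA divff // scale1r.
  apply/rowP => j; rewrite (ord1 j) [LHS]mxE [RHS]mxE [in RHS]mxE /= mulr1n mulr1 //.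
have he' : e = lam *: (d *m Q).
  by rewrite scalemxAl -hw /w -mulmxA QQ mulmx1.
have dl : d 0 (lst n) = 1 by rewrite /d /lst row_mxEr mxE.
have lam2 : lam ^+ 2 <= 1.
  have := sqnorm_ge _ _ d (lst n); rewrite dl expr1n => h1.
  move: he; rewrite he' sqnormZ sqnorm_orth; last by case: rQ.
  move=> h2; nra.
set a := rsubmx p.
have seg : forall t', 0 <= t' <= 1 ->
    [set y | exists2 Q0, Q0 \in finmap.enum_fset D' & rotate Q0 (K0 K) y]
      (row_mx a 0 *m Q + t' *: (d *m Q)).
  move=> t' ht'; exists Q; first exact: hQ.
  exists (row_mx a 0 + t' *: d); last by rewrite mulmxDl -scalemxAl.
  by exists p; split => //; exists t'; split.
case: (ltrgtP lam 0) => hl; last by move: wl; rewrite -/lam hl eqxx.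
- exists ((row_mx a 0 + d) *m Q) => y [t ht <-].
  move: ht; rewrite /= in_itv /= => /andP [t0 t1].
  have -> : (row_mx a 0 + d) *m Q + t *: e =
      row_mx a 0 *m Q + (1 + t * lam) *: (d *m Q).
    by rewrite he' mulmxDl scalerA scalerDl scale1r addrA.
  apply: seg; apply/andP; split; nra.
- exists (row_mx a 0 *m Q) => y [t ht <-].
  move: ht; rewrite /= in_itv /= => /andP [t0 t1].
  rewrite he' scalerA; apply: seg; apply/andP; split; nra.
Qed.
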